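(* For some constants $C\in[1,\infty)$, $\alpha\in(0,\infty)$, $\varrho_\alpha\in(0,\alpha\wedge1)$, $c\in(0,1)$ and $t_0\in\mathbb{N}$, let $h_t=t^{-\alpha}$ for all $t\ge1$ and let $(t_p)_{p\ge0}$ satisfy $t_p=t_{p-1}+\lceil C_{p-1}\log(t_{p-1})\vee C\rceil$ for $p\ge1$, for some $C_{p-1}\in[c\,t_{p-1}^{\varrho_\alpha},t_{p-1}^{\varrho_\alpha}/c]$. Then $(h_t)$ and $(t_p)$ satisfy: (1) $\log(h_{t_{p-1}})/(t_p-t_{p-1})\to0$ and $(t_p-t_{p-1})\sum_{s=t_{p-1}+1}^{t_p-1}h_s^2\to0$; (2) $h_{t_p}<h_{t_{p-1}}$ for all $p$ and $\liminf_{p\to\infty}(h_{t_p}t_p^{\alpha'}+t_p^{-\alpha'}/h_{t_p})>0$ for some $\alpha'\in(0,\infty)$; (3) $\limsup_{p\to\infty}(t_{p+1}-t_p)/(t_p-t_{p-1})<\infty$. Moreover, they also satisfy (4) $|\zeta(h_{t_p}^{-\beta_\star})|^{-2k_\star}\sum_{i=1}^p(t_i-t_{i-1})^{-k_\star\mathds{1}_{\mathbb{N}}(k_\star)}\to0$ for some $\beta_\star\in(0,\infty)$, provided (A6) holds for some $k_\star>(1+\varrho_\alpha)/\varrho_\alpha$, with $\zeta$ the function of (A6).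
   Context: $(Y_t)_{t\ge1}$ are i.i.d. on $(\Omega,\mathcal{F},\mathbb{P})$ with values in $(\mathsf{Y},\mathcal{Y})$; $\{f_\theta,\theta\in\Theta\subseteq\mathbb{R}^d\}$ are densities w.r.t. a $\sigma$-finite measure, $\theta_\star=\arg\max_{\theta\in\Theta}\mathbb{E}\{\log f_\theta(Y_1)\}$; $\mathbb{E}(g)=\mathbb{E}\{g(Y_1)\}$; $\tilde f_\theta=f_\theta$ on $\Theta$ and $0$ otherwise; $V_\epsilon=\Theta\setminus B_\epsilon(\theta_\star)$ with $B_\epsilon$ the open Euclidean ball. (A6) (for a given $k_\star\in\{1/2\}\cup\mathbb{N}$) One of the following holds: (i) there is $C_1\in(0,\infty)$ with $\sup_{C\ge C_1}\mathbb{E}[|\sup_{\theta\in V_C}\log(\tilde f_\theta/f_{\theta_\star})-\mathbb{E}\{\sup_{\theta\in V_C}\log(\tilde f_\theta/f_{\theta_\star})\}|^{2k_\star}]<\infty$ and $\limsup_{C\to\infty}\zeta(C)(\log C)^{-1}<0$ with $\zeta(C)=\mathbb{E}\{\sup_{\theta\in V_C}\log(\tilde f_\theta/f_{\theta_\star})\}$; (ii) $\limsup_{C\to\infty}\zeta(C)(\log C)^{-1}<0$ with $\zeta(C)=\log\{\sup_{\theta\in V_C}\mathbb{E}(\tilde f_\theta/f_{\theta_\star})\}$; (iii) $\mathbb{E}(|\log f_{\theta_\star}|^{2k_\star})<\infty$ and $\limsup_{C\to\infty}\zeta(C)(\log C)^{-1}<0$ with $\zeta(C)=\log\{\sup_{\theta\in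 V_C}\mathbb{E}(\tilde f_\theta)\}$. *)

(* Defs.v *)
From HB Require Import structures.
From mathcomp Require Import all_boot all_order all_algebra.
From mathcomp Require Import all_classical all_reals all_analysis.
Set Implicit Arguments. Unset Strict Implicit. Unset Printing Implicit Defensive.
Import Order.TTheory GRing.Theory Num.Theory.
Import numFieldNormedType.Exports.
Local Open Scope classical_set_scope.
Local Open Scope ring_scope.

Definition hseq (R : realType) (alpha : R) (t : nat) : R := (t%:R) `^ (- alpha).

Definition indN (R : realType) (k : R) : R :=
  if `[< exists n : nat, (0 < n)%N /\ k = n%:R >] then 1 else 0.

Definition eabs_invpow (R : realType) (x : \bar R) (a : R) : R :=
  match x with
  | r%:E => `|r| `^ (- a)
  | _ => 0
  end.

Definition enorm (R : realType) (d : nat) (v : 'rV[R]_d) : R :=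
  Num.sqrt (\sum_(i < d) (v ord0 i) ^+ 2).

Definition Vset (R : realType) (d : nat) (Theta : set 'rV[R]_d)
  (theta_s : 'rV[R]_d) (eps : R) : set 'rV[R]_d :=
  Theta `\` [set th | enorm (th - theta_s) < eps].

Definition ftilde (R : realType) (d : nat) (Y : Type) (Theta : set 'rV[R]_d)
  (f : 'rV[R]_d -> Y -> R) (th : 'rV[R]_d) (y : Y) : R :=
  if `[< Theta th >] then f th y else 0.

Definition Ex (R : realType) (dO dY : measure_display)
  (Om : measurableType dO) (Y : measurableType dY) (P : probability Om R)
  (Ys : nat -> Om -> Y) (g : Y -> \bar R) : \bar R :=
  (\int[P]_w g (Ys 1%N w))%E.

(* log( tilde f_theta / f_theta_star ), computed in the extended reals as
   log tilde f_theta - log f_theta_star  (log 0 = -oo) *)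
Definition logratio (R : realType) (d : nat) (Y : Type) (Theta : set 'rV[R]_d)
  (f : 'rV[R]_d -> Y -> R) (theta_s th : 'rV[R]_d) (y : Y) : \bar R :=
  (lne (ftilde Theta f th y)%:E - lne (f theta_s y)%:E)%E.

Definition suplogratio (R : realType) (d : nat) (Y : Type) (Theta : set 'rV[R]_d)
  (f : 'rV[R]_d -> Y -> R) (theta_s : 'rV[R]_d) (C : R) (y : Y) : \bar R :=
  ereal_sup [set logratio Theta f theta_s th y | th in Vset Theta theta_s C].

Definition zeta1 (R : realType) (d : nat) (dO dY : measure_display)
  (Om : measurableType dO) (Y : measurableType dY) (P : probability Om R)
  (Ys : nat -> Om -> Y) (Theta : set 'rV[R]_d) (f : 'rV[R]_d -> Y -> R)
  (theta_s : 'rV[R]_d) (C : R) : \bar R :=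
  Ex P Ys (suplogratio Theta f theta_s C).

Definition zeta2 (R : realType) (d : nat) (dO dY : measure_display)
  (Om : measurableType dO) (Y : measurableType dY) (P : probability Om R)
  (Ys : nat -> Om -> Y) (Theta : set 'rV[R]_d) (f : 'rV[R]_d -> Y -> R)
  (theta_s : 'rV[R]_d) (C : R) : \bar R :=
  lne (ereal_sup [set Ex P Ys (fun y => expeR (logratio Theta f theta_s th y))
                 | th in Vset Theta theta_s C]).

Definition zeta3 (R : realType) (d : nat) (dO dY : measure_display)
  (Om : measurableType dO) (Y : measurableType dY) (P : probability Om R)
  (Ys : nat -> Om -> Y) (Theta : set 'rV[R]_d) (f : 'rV[R]_d -> Y -> R)
  (theta_s : 'rV[R]_d) (C : R) : \bar R :=
  lne (ereal_sup [set Ex P Ys (fun y => (ftilde Theta f th y)%:E)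
                 | th in Vset Theta theta_s C]).

Definition neg_log_limsup (R : realType) (zeta : R -> \bar R) : Prop :=
  (limf_esup (fun C : R => zeta C * ((ln C)^-1)%:E) (@pinfty_nbhs R) < 0)%E.

Definition A6_i (R : realType) (d : nat) (dO dY : measure_display)
  (Om : measurableType dO) (Y : measurableType dY) (P : probability Om R)
  (Ys : nat -> Om -> Y) (Theta : set 'rV[R]_d) (f : 'rV[R]_d -> Y -> R)
  (theta_s : 'rV[R]_d) (k : R) : Prop :=
  (exists2 C1 : R, 0 < C1 &
     (ereal_sup [set Ex P Ys (fun y =>
                   poweR (`| suplogratio Theta f theta_s C y
                            - zeta1 P Ys Theta f theta_s C |)%E (2 * k))
                | C in [set C | (C1 <= C)%R]] < +oo)%E)
  /\ neg_log_limsup (zeta1 P Ys Theta f theta_s).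

Definition A6_ii (R : realType) (d : nat) (dO dY : measure_display)
  (Om : measurableType dO) (Y : measurableType dY) (P : probability Om R)
  (Ys : nat -> Om -> Y) (Theta : set 'rV[R]_d) (f : 'rV[R]_d -> Y -> R)
  (theta_s : 'rV[R]_d) : Prop :=
  neg_log_limsup (zeta2 P Ys Theta f theta_s).

Definition A6_iii (R : realType) (d : nat) (dO dY : measure_display)
  (Om : measurableType dO) (Y : measurableType dY) (P : probability Om R)
  (Ys : nat -> Om -> Y) (Theta : set 'rV[R]_d) (f : 'rV[R]_d -> Y -> R)
  (theta_s : 'rV[R]_d) (k : R) : Prop :=
  (Ex P Ys (fun y => poweR (`| lne (f theta_s y)%:E |)%E (2 * k)) < +oo)%E
  /\ neg_log_limsup (zeta3 P Ys Theta f theta_s).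

Definition iid_seq (R : realType) (dO dY : measure_display)
  (Om : measurableType dO) (Y : measurableType dY) (P : probability Om R)
  (Ys : nat -> Om -> Y) : Prop :=
  (forall t, (0 < t)%N -> measurable_fun setT (Ys t))
  /\ (forall t (A : set Y), (0 < t)%N -> measurable A ->
        P (Ys t @^-1` A) = P (Ys 1%N @^-1` A))
  /\ (forall (s : seq nat) (A : nat -> set Y), uniq s ->
        (forall i, i \in s -> (0 < i)%N) -> (forall i, measurable (A i)) ->
        fine (P (\big[setI/setT]_(i <- s) (Ys i @^-1` A i)))
        = \prod_(i <- s) fine (P (Ys i @^-1` A i))).

Definition density_model (R : realType) (d : nat) (dO dY : measure_display)
  (Om : measurableType dO) (Y : measurableType dY) (P : probability Om R)
  (Ys : nat -> Om -> Y) (nu : {measure set Y -> \bar R})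
  (Theta : set 'rV[R]_d) (f : 'rV[R]_d -> Y -> R) (theta_s : 'rV[R]_d) : Prop :=
  sigma_finite setT nu
  /\ (forall th, Theta th ->
        [/\ measurable_fun setT (f th), (forall y, 0 <= f th y)
          & (\int[nu]_y (f th y)%:E = 1)%E])
  /\ Theta theta_s
  /\ (forall th, Theta th -> th <> theta_s ->
        (Ex P Ys (fun y => lne (f th y)%:E) < Ex P Ys (fun y => lne (f theta_s y)%:E))%E).

(* Main.v *)
Set Warnings "-notation-overridden,-ambiguous-paths,-notation-incompatible-prefix".
Require Import Defs.
From HB Require Import structures.
From mathcomp Require Import all_boot all_order all_algebra.
From mathcomp Require Import all_classical all_reals all_analysis.
From mathcomp Require Import lra ring.
Import Order.TTheory GRing.Theory Num.Theory.
Import numFieldNormedType.Exports.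
Local Open Scope classical_set_scope.
Local Open Scope ring_scope.
Set Implicit Arguments. Unset Strict Implicit.
Lemma lnle (R : realType) (y : R) : 0 < y -> ln y <= y - 1.
Proof. move=> y0; have := @le_ln1Dx R (y - 1); rewrite (_ : 1 + (y - 1) = y); [apply; lra | ring]. Qed.

Lemma lemaxl (R : realType) (x y : R) : x <= Num.max x y.
Proof. by rewrite le_max lexx. Qed.
Lemma lemaxr (R : realType) (x y : R) : y <= Num.max x y.
Proof. by rewrite le_max lexx orbT. Qed.

Lemma G1 (R : realType) (b K : R) : 0 < b -> forall eps : R, 0 < eps ->
  exists M : R, forall x : R, M <= x -> 1 <= x /\ K * x `^ (- b) <= eps.
Proof.
move=> b0 eps e0.
have K1 : 0 < `|K| + 1 by rewrite ltr_pwDr // normr_ge0.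
exists (Num.max 1 (((`|K| + 1) / eps) `^ (b^-1))) => x hx.
have x1 : 1 <= x by apply: le_trans hx; rewrite le_max lexx.
split=> //.
have hM : ((`|K| + 1) / eps) `^ (b^-1) <= x by apply: le_trans hx; rewrite le_max lexx orbT.
have hxb : (`|K| + 1) / eps <= x `^ b.
  have := @ge0_ler_powR R b (ltW b0) _ _ _ _ hM.
  rewrite -powRrM mulVf ?gt_eqF // powRr1; last by apply: divr_ge0; [exact: ltW| exact: ltW].
  apply; rewrite ?nnegrE ?powR_ge0 //; lra.
have xb0 : 0 < x `^ b by apply: powR_gt0; lra.
rewrite powRN.
apply: (@le_trans _ _ ((`|K| + 1) * (x `^ b)^-1)).
  apply: ler_wpM2r; [by rewrite invr_ge0 ltW | ].
  apply: le_trans (ler_norm _) _; lra.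
rewrite -ler_pdivlMl // mulrC; rewrite -invf_ple ?posrE ?invr_gt0 ?divr_gt0 //.
by rewrite invf_div.
Qed.

Lemma lnpow (R : realType) (b x : R) : 0 < b -> 0 < x -> ln x <= (2 / b) * x `^ (b / 2).
Proof.
move=> b0 x0.
have h := lnle (powR_gt0 (b / 2) x0).
rewrite ln_powR in h.
have h1 : 0 < x `^ (b / 2) by apply: powR_gt0.
rewrite -(@ler_pM2l _ (b / 2)) ?divr_gt0 //.
rewrite mulrA (_ : b / 2 * (2 / b) = 1) ?mul1r; first lra.
by field; rewrite gt_eqF.
Qed.

Lemma G2 (R : realType) (b : R) : 0 < b -> forall eps : R, 0 < eps ->
  exists M : R, forall x : R, M <= x -> 1 <= x /\ ln x * x `^ (- b) <= eps.
Proof.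
move=> b0 eps e0.
have [M hM] := G1 (2 / b) (divr_gt0 b0 (ltr0Sn _ 1)) e0.
exists M => x /hM [x1 h]; split=> //.
apply: le_trans h.
have x0 : 0 < x by lra.
apply: le_trans (ler_wpM2r (powR_ge0 _ _) (lnpow b0 x0)) _.
rewrite -(mulrA (2 / b)) -powRD; last by apply/implyP => _; rewrite gt_eqF.
by rewrite (_ : b / 2 + - b = - (b / 2)) //; field.
Qed.

Lemma G5 (R : realType) (A : R) : exists M : R, forall x : R, M <= x -> 1 <= x /\ A <= ln x.
Proof.
exists (expR (Num.max A 0)) => x hx.
have e1 : 1 <= expR (Num.max A 0) by rewrite -expR0 ler_expR le_max lexx orbT.
have x0 : 0 < x by lra.
split; first lra.
have h : ln (expR (Num.max A 0)) <= ln x by rewrite ler_ln ?posrE ?expR_gt0.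
rewrite expRK in h; apply: le_trans h; by rewrite le_max lexx.
Qed.
Lemma ceil_bnd (R : realType) (x : R) : x <= (Num.ceil x)%:~R < x + 1.
Proof.
apply/andP; split; first exact: ceil_ge.
have := ceilB1_lt x; rewrite intrB /=; lra.
Qed.



Definition hyps (R : realType) (C rho c : R) (t : nat -> nat) (Cs : nat -> R) :=
  [/\ 1 <= C, 0 < rho, rho < 1, 0 < c &
   [/\ (0 < t 0%N)%N,
   (forall p, c * (t p)%:R `^ rho <= Cs p <= (t p)%:R `^ rho / c)
  & (forall p, ((t p.+1)%:R : R) =
          (t p)%:R + (Num.ceil (Num.max (Cs p * ln (t p)%:R) C))%:~R)]].
Arguments hyps {R}.


Lemma Dge (R : realType) (C rho c : R) (t : nat -> nat) (Cs : nat -> R) (H : hyps C rho c t Cs) p : Num.max (Cs p * ln (((t p)%:R : R))) C <= ((t p.+1)%:R : R) - ((t p)%:R : R) < Num.max (Cs p * ln (((t p)%:R : R))) C + 1.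
Proof. case: H => _ _ _ _ [_ _ hrec]; rewrite hrec addrAC subrr add0r; exact: ceil_bnd. Qed.

Lemma D1 (R : realType) (C rho c : R) (t : nat -> nat) (Cs : nat -> R) (H : hyps C rho c t Cs) p : 1 <= ((t p.+1)%:R : R) - ((t p)%:R : R).
Proof.
have /andP[h _] := Dge H p; apply: le_trans h; case: H => hC _ _ _ _.
apply: le_trans hC _; by rewrite le_max lexx orbT.
Qed.

Lemma T1 (R : realType) (C rho c : R) (t : nat -> nat) (Cs : nat -> R) (H : hyps C rho c t Cs) p : 1 <= ((t p)%:R : R).
Proof.
elim: p => [|p IH]; first by case: H => _ _ _ _ [h _ _]; rewrite ler1n.
have := D1 H p; lra.
Qed.

Lemma lnT0 (R : realType) (C rho c : R) (t : nat -> nat) (Cs : nat -> R) (H : hyps C rho c t Cs) p : 0 <= ln (((t p)%:R : R)).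
Proof. exact: ln_ge0 (T1 H p). Qed.

Lemma Dlow (R : realType) (C rho c : R) (t : nat -> nat) (Cs : nat -> R) (H : hyps C rho c t Cs) p : c * ((t p)%:R : R) `^ rho * ln (((t p)%:R : R)) <= ((t p.+1)%:R : R) - ((t p)%:R : R).
Proof.
have /andP[h _] := Dge H p; apply: le_trans h; rewrite le_max; apply/orP; left.
have l0 := lnT0 H p.
case: H => _ _ _ _ [_ hCs _]; have /andP[h1 _] := hCs p; nra.
Qed.

Lemma Dup (R : realType) (C rho c : R) (t : nat -> nat) (Cs : nat -> R) (H : hyps C rho c t Cs) p : ((t p.+1)%:R : R) - ((t p)%:R : R) <= ((t p)%:R : R) `^ rho * ln (((t p)%:R : R)) / c + C + 1.
Proof.
have /andP[_ h] := Dge H p; apply: le_trans (ltW h) _; rewrite lerD2r.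
have l0 := lnT0 H p.
case: H => hC _ _ hc0 [_ hCs _]; have /andP[h0 h1] := hCs p.
have h2 : Cs p * ln (((t p)%:R : R)) <= ((t p)%:R : R) `^ rho * ln (((t p)%:R : R)) / c.
  rewrite mulrAC; nra.
have h3 : 0 <= Cs p * ln (((t p)%:R : R)).
  apply: mulr_ge0 l0; apply: le_trans h0; apply: mulr_ge0; [exact: ltW|exact: powR_ge0].
move: h2 h3; set a := Cs p * _; set b := _ / c => h2 h3.
rewrite /Num.max; clearbody a b; case: ifP => _; lra.
Qed.


Lemma Tge (R : realType) (C rho c : R) (t : nat -> nat) (Cs : nat -> R) (H : hyps C rho c t Cs) p :
  p%:R + 1 <= ((t p)%:R : R).
Proof.
elim: p => [|p IH]; first by rewrite add0r (T1 H 0).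
have := D1 H p; rewrite -natr1; lra.
Qed.

Lemma evT (R : realType) (C rho c : R) (t : nat -> nat) (Cs : nat -> R) (H : hyps C rho c t Cs) (M : R) :
  \forall p \near \oo, M <= ((t p)%:R : R).
Proof.
apply: filterS (nbhs_infty_ger M) => p hp; have := Tge H p; lra.
Qed.

Lemma cvg0_bound (R : realType) (X u : nat -> R) (g : R -> R) :
  (forall M, \forall p \near \oo, M <= X p) ->
  (forall eps, 0 < eps -> exists M, forall x, M <= x -> g x <= eps) ->
  (\forall p \near \oo, `|u p| <= g (X p)) -> u @ \oo --> (0 : R).
Proof.
move=> hX hg hb; apply/cvgrPdist_le => eps e0.
have [M hM] := hg eps e0.
apply: filterS2 (hX M) hb => p h1 h2; rewrite sub0r normrN; exact: le_trans h2 (hM _ h1).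
Qed.

Lemma P1a_bound (R : realType) (C rho c alpha : R) (t : nat -> nat) (Cs : nat -> R) (H : hyps C rho c t Cs) p :
  0 < alpha ->
  `|ln (((t p)%:R : R) `^ (- alpha)) / (((t p.+1)%:R : R) - (t p)%:R)| <= alpha / c * ((t p)%:R : R) `^ (- rho).
Proof.
move=> a0.
have D0 := D1 H p; have l0 := lnT0 H p; have Dl := Dlow H p; have T0 := T1 H p.
have c0 : 0 < c by case: H.
move: D0 l0 Dl T0; set D := (_ - _); set T := ((t p)%:R : R) => D0 l0 Dl T0.
have y0 : 0 < T `^ rho by apply: powR_gt0; lra.
rewrite ln_powR !normrM normrN !ger0_norm ?invr_ge0 //; try lra.
rewrite ler_pdivrMr; last lra.
rewrite powRN.
have -> : alpha * ln T = (alpha / c) * (T `^ rho)^-1 * (c * T `^ rho * ln T).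
  by field; apply/andP; split; rewrite gt_eqF.
apply: ler_wpM2l Dl.
apply: mulr_ge0; [apply: divr_ge0; lra | by rewrite invr_ge0 ltW].
Qed.

Lemma powN_dec (R : realType) (a s alpha : R) : 0 <= alpha -> 1 <= a <= s -> s `^ (- alpha) <= a `^ (- alpha).
Proof.
move=> a0 /andP[a1 as1].
have ha : 0 < a `^ alpha by apply: powR_gt0; lra.
rewrite !powRN lef_pV2 ?posrE //; last by apply: powR_gt0; lra.
by apply: ge0_ler_powR => //; rewrite nnegrE; lra.
Qed.

Lemma sum_bound (R : realType) (alpha : R) (a b : nat) : 0 <= alpha -> (0 < a)%N -> (a <= b)%N ->
  0 <= \sum_(a.+1 <= s < b) (((s%:R : R) `^ (- alpha)) ^+ 2) <= (b%:R - a%:R) * (((a%:R : R) `^ (- alpha)) ^+ 2).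
Proof.
move=> a0 apos ab.
apply/andP; split.
  by apply: sumr_ge0 => i _; apply: sqr_ge0.
apply: le_trans (ler_sum_nat (G := fun _ => ((a%:R : R) `^ (- alpha)) ^+ 2) _) _.
  move=> i /andP[hi _].
  have h := @powN_dec R a%:R i%:R alpha a0.
  have h2 : 1 <= (a%:R : R) <= i%:R by rewrite ler1n apos ler_nat ltnW.
  have := h h2; have := powR_ge0 (i%:R : R) (- alpha); nra.
rewrite sumr_const_nat -[_ *+ (b - a.+1)]mulr_natr mulrC ler_wpM2r ?sqr_ge0 //.
case: (leqP b a.+1) => hb.
  by rewrite (eqP (_ : (b - a.+1 == 0)%N)) ?subn_eq0 // subr_ge0 ler_nat.
by rewrite -natrB ?ler_nat ?leq_sub2l // (leq_trans (ltnW (ltnSn a)) (ltnW hb)).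
Qed.

Lemma P1b_bound (R : realType) (C rho c alpha : R) (t : nat -> nat) (Cs : nat -> R) (H : hyps C rho c t Cs) p :
  0 < alpha ->
  `|(((t p.+1)%:R : R) - (t p)%:R) * \sum_((t p).+1 <= s < t p.+1) ((s%:R : R) `^ (- alpha)) ^+ 2|
  <= ((ln ((t p)%:R : R) * ((t p)%:R : R) `^ (- (alpha - rho))) / c + (C + 1) * ((t p)%:R : R) `^ (- alpha)) ^+ 2.
Proof.
move=> a0.
have D0 := D1 H p; have l0 := lnT0 H p; have Du := Dup H p; have T0 := T1 H p.
have c0 : 0 < c by case: H.
have tle : (t p <= t p.+1)%N by rewrite -(ler_nat R); lra.
have tpos : (0 < t p)%N by rewrite -(ltr_nat R); lra.
have /andP[s0 s1] := sum_bound (ltW a0) tpos tle.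
move: D0 l0 Du T0 s0 s1.
set S := \sum_(_ <= _ < _) _; set D := (_ - _); set T := ((t p)%:R : R) => D0 l0 Du T0 s0 s1.
set q := T `^ (- alpha).
have q0 : 0 <= q by apply: powR_ge0.
rewrite -/q in s1.
have e : T `^ rho * q = T `^ (- (alpha - rho)).
  rewrite /q -powRD; last by apply/implyP => _; rewrite gt_eqF //; lra.
  by congr (_ `^ _); ring.
have hDq : D * q <= ln T * T `^ (- (alpha - rho)) / c + (C + 1) * q.
  apply: le_trans (ler_wpM2r q0 Du) _.
  suff -> : (T `^ rho * ln T / c + C + 1) * q = ln T * (T `^ rho * q) / c + (C + 1) * q by rewrite e.
  by field; rewrite gt_eqF.
rewrite ger0_norm; last by apply: mulr_ge0 => //; lra.
have Dq0 : 0 <= D * q by apply: mulr_ge0 => //; lra.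
apply: le_trans (_ : D * S <= (D * q) ^+ 2) _.
  rewrite expr2; have -> : D * q * (D * q) = D * (D * q ^+ 2) by rewrite expr2; ring.
  apply: ler_wpM2l; lra.
move: hDq Dq0; set g := (_ + _) => hDq Dq0.
have g0 : 0 <= g by lra.
clearbody g; nra.
Qed.

Lemma G3 (R : realType) (C rho c alpha : R) : 0 < alpha - rho -> 0 < alpha -> 0 < c -> 0 <= C ->
  forall eps : R, 0 < eps -> exists M : R, forall x : R, M <= x ->
  ((ln x * x `^ (- (alpha - rho))) / c + (C + 1) * x `^ (- alpha)) ^+ 2 <= eps.
Proof.
move=> b0 a0 c0 C0 eps e0.
set m := Num.min 1 eps.
have m0 : 0 < m by rewrite lt_min ltr01 e0.
have m1 : m <= 1 by rewrite ge_min lexx.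
have me : m <= eps by rewrite ge_min lexx orbT.
have cm0 : 0 < c * (m / 2) by apply: mulr_gt0 => //; lra.
have m20 : 0 < m / 2 by lra.
have [M1 hM1] := G2 b0 cm0.
have [M2 hM2] := G1 (C + 1) a0 m20.
exists (Num.max M1 M2) => x hx.
have [x1 h1] := hM1 x (le_trans (lemaxl _ _) hx).
have [_ h2] := hM2 x (le_trans (lemaxr _ _) hx).
have l0 : 0 <= ln x by apply: ln_ge0.
have p1 : 0 <= ln x * x `^ (- (alpha - rho)) by apply: mulr_ge0 => //; apply: powR_ge0.
have p2 : 0 <= (C + 1) * x `^ (- alpha) by apply: mulr_ge0; [lra | apply: powR_ge0].
have h1' : ln x * x `^ (- (alpha - rho)) / c <= m / 2 by rewrite ler_pdivrMr // (mulrC (m / 2)).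
have p1' : 0 <= ln x * x `^ (- (alpha - rho)) / c by apply: divr_ge0 => //; lra.
move: h1' p1' h2 p2; set u := _ / c; set v := (C + 1) * _ => h1' p1' h2 p2.
clearbody u v.
have s1 : u + v <= m by lra.
have s0 : 0 <= u + v by lra.
have : (u + v) ^+ 2 <= m * m by rewrite expr2; apply: ler_pM.
nra.
Qed.

Lemma esup_le (R : realType) (u : nat -> \bar R) (M : \bar R) :
  (forall n, (u n <= M)%E) -> (limn_esup u <= M)%E.
Proof.
move=> hu; rewrite /limn_esup limf_esupE.
apply: le_trans (ereal_inf_lbound _) _.
  by exists setT; [exact: filterT | reflexivity].
by apply: ge_ereal_sup => _ [n _ <-]; exact: hu.
Qed.

Lemma neglog_ev (R : realType) (zeta : R -> \bar R) : neg_log_limsup zeta ->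
  exists2 d : R, 0 < d & exists M : R, forall x, M < x -> (zeta x * ((ln x)^-1)%:E <= (- d)%:E)%E.
Proof.
rewrite /neg_log_limsup limf_esupE => /ereal_inf_lt [_ [V hV <-]] hs.
case: hV => M [Mr hM].
have [d d0 hd] : exists2 d : R, 0 < d & (ereal_sup [set zeta x * ((ln x)^-1)%:E | x in V] <= (- d)%:E)%E.
  move: hs; case: (ereal_sup _) => [r | | ] //= hr.
  - by exists (- r); [rewrite oppr_gt0 -lte_fin | rewrite opprK].
  - by exists 1 => //; rewrite leNye.
exists d => //; exists M => x /hM Vx.
apply: le_trans hd; apply: ereal_sup_ubound; by exists x.
Qed.

Lemma lnpow1 (R : realType) (b x : R) : 0 < b -> 0 < x -> b * ln x <= x `^ b.
Proof.
move=> b0 x0; have h := lnle (powR_gt0 b x0); rewrite ln_powR in h; lra.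
Qed.

Lemma Lbound (R : realType) (C rho c : R) (t : nat -> nat) (Cs : nat -> R) (H : hyps C rho c t Cs) p :
  ((t p)%:R : R) `^ rho <= (c^-1 + expR 1) * (((t p.+1)%:R : R) - (t p)%:R).
Proof.
have D0 := D1 H p; have l0 := lnT0 H p; have Dl := Dlow H p; have T0 := T1 H p.
case: H => _ r0 r1 c0 _.
move: D0 l0 Dl T0; set D := (_ - _); set T := ((t p)%:R : R) => D0 l0 Dl T0.
have y0 : 0 < T `^ rho by apply: powR_gt0; lra.
have e0 : 0 < expR 1 :> R by exact: expR_gt0.
have ci : 0 < c^-1 by rewrite invr_gt0.
case: (lerP 1 (ln T)) => hl.
  have h1 : c * T `^ rho <= D by nra.
  have h2 : T `^ rho <= c^-1 * D.
    by rewrite -(ler_pM2l c0) mulrA mulfV ?gt_eqF // mul1r.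
  nra.
have h1 : T `^ rho <= T by apply: ler1_powR => //; lra.
have h2 : T <= expR 1.
  rewrite -[X in X <= _](@lnK R T) ?posrE; last lra.
  by rewrite ler_expR ltW.
nra.
Qed.

Lemma Tgrow (R : realType) (C rho c : R) (t : nat -> nat) (Cs : nat -> R) (H : hyps C rho c t Cs) p :
  ((t p.+1)%:R : R) <= (2 + C + (c * (1 - rho))^-1) * (t p)%:R.
Proof.
have D0 := D1 H p; have l0 := lnT0 H p; have Du := Dup H p; have T0 := T1 H p.
case: H => C1 r0 r1 c0 _.
move: D0 l0 Du T0; set T := ((t p)%:R : R) => D0 l0 Du T0.
have hT : 0 < T by lra.
have h1 : (1 - rho) * ln T <= T `^ (1 - rho) by apply: lnpow1 => //; lra.
have e : T `^ rho * T `^ (1 - rho) = T.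
  rewrite -powRD; last by apply/implyP => _; rewrite gt_eqF.
  rewrite (_ : rho + (1 - rho) = 1); [by rewrite powRr1 //; lra | ring].
have y0 : 0 < T `^ rho by apply: powR_gt0.
have h2 : T `^ rho * ln T <= T / (1 - rho).
  rewrite ler_pdivlMr; last lra.
  have := ler_wpM2l (ltW y0) h1; rewrite e => h; nra.
have h3 : T `^ rho * ln T / c <= (c * (1 - rho))^-1 * T.
  have -> : (c * (1 - rho))^-1 * T = T / (1 - rho) / c.
    by field; apply/andP; split; rewrite gt_eqF //; lra.
  by apply: ler_wpM2r h2; rewrite invr_ge0 ltW.
have h4 : 0 <= (C + 1) * (T - 1) by apply: mulr_ge0; lra.
move: h3 Du; set a := _ / c; set k := (c * (1 - rho))^-1 => h3 Du.
clearbody a k; nra.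
Qed.

Definition Kc (R : realType) (C rho c : R) := 2 + C + (c * (1 - rho))^-1.
Definition Lc (R : realType) (c : R) := c^-1 + expR 1.

Lemma ratio_bound (R : realType) (C rho c : R) (t : nat -> nat) (Cs : nat -> R) (H : hyps C rho c t Cs) p :
  (((t p.+2)%:R : R) - (t p.+1)%:R) / (((t p.+1)%:R : R) - (t p)%:R)
  <= Kc C rho c / c ^+ 2 + Kc C rho c * ln (Kc C rho c) * Lc c / c + C + 1.
Proof.
have D0 := D1 H p; have l0 := lnT0 H p; have Dl := Dlow H p; have T0 := T1 H p.
have Du := Dup H p.+1; have l0' := lnT0 H p.+1; have T0' := T1 H p.+1.
have Lb := Lbound H p; have Tg := Tgrow H p.
case: H => C1 r0 r1 c0 _.
rewrite -/(Kc C rho c) in Tg; rewrite -/(Lc c) in Lb.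
move: D0 l0 Dl T0 Du l0' T0' Lb Tg.
set K := Kc C rho c; set L := Lc c.
set D := (_ - (t p)%:R); set D' := (_ - _); set T := ((t p)%:R : R); set T' := ((t p.+1)%:R : R).
move=> D0 l0 Dl T0 Du l0' T0' Lb Tg.
have K1 : 1 <= K.
  rewrite /K /Kc; have : 0 <= (c * (1 - rho))^-1 by rewrite invr_ge0 mulr_ge0 //; lra.
  lra.
have lK : 0 <= ln K by apply: ln_ge0.
have y0 : 0 <= T `^ rho by apply: powR_ge0.
have hy : T' `^ rho <= K * T `^ rho.
  apply: le_trans (_ : (K * T) `^ rho <= _).
    by apply: ge0_ler_powR; rewrite ?nnegrE; lra.
  rewrite powRM; try lra.
  by apply: ler_wpM2r => //; apply: ler1_powR => //; lra.
have hl : ln T' <= ln K + ln T.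
  rewrite -lnM ?posrE; try lra.
  by rewrite ler_ln ?posrE; try lra; apply: mulr_gt0; lra.
have ha : T' `^ rho * ln T' <= K * T `^ rho * (ln K + ln T).
  by apply: ler_pM => //; apply: powR_ge0.
rewrite ler_pdivrMr; last lra.
move: Du ha Dl Lb; rewrite /D' -/T'.
have -> : K / c ^+ 2 = K * c^-1 * c^-1 by rewrite expr2 invfM; ring.
set w := c^-1; set a := T' `^ rho * ln T'; set y := T `^ rho; set l := ln T; set lk := ln K.
move=> Du ha Dl Lb.
have w0 : 0 < w by rewrite invr_gt0.
have cw : c * w = 1 by rewrite mulfV ?gt_eqF.
rewrite -/lk in lK; rewrite -/y in y0.
clearbody a y l lk w L K.
have p1 := ler_wpM2r (ltW w0) ha.
have p2 : K * w * w * (c * y * l) <= K * w * w * D.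
  apply: ler_wpM2l Dl; apply: mulr_ge0; [apply: mulr_ge0|]; lra.
have p3 : K * lk * w * y <= K * lk * w * (L * D).
  apply: ler_wpM2l Lb; apply: mulr_ge0; [apply: mulr_ge0|]; lra.
have p4 : (C + 1) * 1 <= (C + 1) * D by apply: ler_wpM2l; lra.
have e1 : K * y * (lk + l) * w = K * lk * w * y + K * w * w * (c * y * l).
  have -> : K * w * w * (c * y * l) = K * w * (c * w) * y * l by ring.
  rewrite cw; ring.
rewrite e1 in p1.
nra.
Qed.

Lemma term_bound (R : realType) (C rho c : R) (t : nat -> nat) (Cs : nat -> R) (H : hyps C rho c t Cs) (k : R) j :
  1 <= rho * k -> 0 <= k ->
  (((t j.+1)%:R : R) - (t j)%:R) `^ (- k) <= (Lc c `^ k + 1) * (ln ((t j.+1)%:R : R) - ln ((t j)%:R : R)).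
Proof.
move=> hk k0.
have D0 := D1 H j; have T0 := T1 H j; have Lb := Lbound H j.
rewrite -/(Lc c) in Lb.
have L0 : 0 <= Lc c.
  rewrite /Lc; case: H => _ _ _ c0 _; have := expR_gt0 (1 : R).
  have : 0 < c^-1 by rewrite invr_gt0. lra.
move: D0 T0 Lb; set D := (_ - _); set T := ((t j)%:R : R); set T' := ((t j.+1)%:R : R).
move=> D0 T0 Lb.
have eT' : T' = T + D by rewrite /D; ring.
have Dk1 : 1 <= D `^ k by have := ler_powR D0 k0; rewrite powRr0.
have h1 : T <= Lc c `^ k * D `^ k.
  apply: le_trans (_ : T <= T `^ (rho * k)) _; first by apply: le1r_powR.
  rewrite powRrM -powRM //; last lra.
  apply: ge0_ler_powR => //; rewrite ?nnegrE ?powR_ge0 //.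
  apply: mulr_ge0; lra.
have h2 : D <= D * D `^ k by rewrite ler_peMr; lra.
have h3 : T * D `^ k <= T * (D * D `^ k) by apply: ler_wpM2l; [lra | rewrite ler_peMl; lra].
have hT' : T' <= (Lc c `^ k + 1) * D * D `^ k.
  rewrite eT'; have : 0 <= Lc c `^ k by exact: powR_ge0.
  move: h1 h2 Dk1; set u := Lc c `^ k; set v := D `^ k => h1 h2 Dk1 u0.
  clearbody u v; nra.
have hln : D / T' <= ln T' - ln T.
  have T'0 : 0 < T' by lra.
  have := lnle (divr_gt0 (_ : 0 < T) T'0); rewrite ln_div ?posrE; try lra.
  have -> : T / T' - 1 = - (D / T') by rewrite eT'; field; rewrite gt_eqF //; lra.
  lra.
apply: le_trans (_ : _ <= (Lc c `^ k + 1) * (D / T')) _; last first.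
  apply: ler_wpM2l hln; have := powR_ge0 (Lc c) k; lra.
rewrite powRN.
have Dk0 : 0 < D `^ k by lra.
rewrite mulrA ler_pdivlMr; last lra.
by rewrite mulrC ler_pdivrMr.
Qed.

Lemma S_bound (R : realType) (C rho c : R) (t : nat -> nat) (Cs : nat -> R) (H : hyps C rho c t Cs) (k : R) p :
  1 <= rho * k -> 0 <= k ->
  \sum_(1 <= i < p.+1) (((t i)%:R : R) - (t i.-1)%:R) `^ (- k) <= (Lc c `^ k + 1) * ln ((t p)%:R : R).
Proof.
move=> hk k0.
have K0 : 0 <= Lc c `^ k + 1 by have := powR_ge0 (Lc c) k; lra.
elim: p => [|p IH].
  by rewrite big_geq // mulr_ge0 // (lnT0 H 0).
rewrite big_nat_recr //=.
have := term_bound H p hk k0.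
move: IH; set K := Lc c `^ k + 1; set S := \sum_(_ <= _ < _) _ => IH hb.
move: K0 IH hb; clearbody K S => K0 IH hb; nra.
Qed.

Lemma G4 (R : realType) (K d : R) : 0 <= K -> 0 < d -> forall eps : R, 0 < eps ->
  exists M : R, forall x : R, M <= x -> K / (d ^+ 2 * ln x) <= eps.
Proof.
move=> K0 d0 eps e0.
have d2 : 0 < d ^+ 2 by rewrite exprn_gt0.
have [M hM] := G5 (Num.max 1 (K / (d ^+ 2 * eps))).
exists M => x /hM [x1 hl].
have l1 : 1 <= ln x by apply: le_trans hl; exact: lemaxl.
have l2 : K / (d ^+ 2 * eps) <= ln x by apply: le_trans hl; exact: lemaxr.
rewrite ler_pdivrMr; last by apply: mulr_gt0 => //; lra.
move: l2; rewrite ler_pdivrMr; last by apply: mulr_gt0.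
move=> h; apply: le_trans h _; rewrite le_eqVlt; apply/orP; left; apply/eqP; ring.
Qed.

Lemma part4 (R : realType) (C rho c alpha : R) (t : nat -> nat) (Cs : nat -> R) (H : hyps C rho c t Cs)
  (k : R) (zeta : R -> \bar R) :
  0 < alpha -> 1 <= k -> 1 <= rho * k -> indN k = 1 -> neg_log_limsup zeta ->
  exists2 beta : R, 0 < beta &
    ((fun p : nat => eabs_invpow (zeta (hseq alpha (t p) `^ (- beta))) (2 * k) *
       \sum_(1 <= i < p.+1) (((t i)%:R : R) - (t i.-1)%:R) `^ (- (k * indN k))) @ \oo --> (0 : R)).
Proof.
move=> a0 k1 rk ik /neglog_ev [d d0 [M hM]].
exists alpha^-1; first by rewrite invr_gt0.
have e : forall p, hseq alpha (t p) `^ (- alpha^-1) = (t p)%:R.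
  move=> p; rewrite /hseq -powRrM (_ : - alpha * - alpha^-1 = 1).
    by rewrite powRr1 // ler0n.
  by field; rewrite gt_eqF.
rewrite ik mulr1.
have K0 : 0 <= Lc c `^ k + 1 by have := powR_ge0 (Lc c) k; lra.
apply: (@cvg0_bound R (fun p => (t p)%:R) _ (fun x => (Lc c `^ k + 1) / (d ^+ 2 * ln x))).
- exact: evT H.
- exact: G4.
apply: filterS (evT H (Num.max (M + 1) (expR d^-1))) => p hp /=.
rewrite e.
have Sb := S_bound H p rk (_ : 0 <= k); have {}Sb := Sb ltac:(lra).
have S0 : 0 <= \sum_(1 <= i < p.+1) (((t i)%:R : R) - (t i.-1)%:R) `^ (- k).
  by apply: sumr_ge0 => i _; apply: powR_ge0.
move: hp Sb S0; set x := ((t p)%:R : R); set S := \sum_(_ <= _ < _) _ => hp Sb S0.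
have xM : M < x by have := lemaxl (M + 1) (expR d^-1); lra.
have xe : expR d^-1 <= x by have := lemaxr (M + 1) (expR d^-1); lra.
have x0 : 0 < x by have := expR_gt0 d^-1; lra.
have lx : d^-1 <= ln x.
  by rewrite -[d^-1]expRK ler_ln ?posrE ?expR_gt0.
have dl : 1 <= d * ln x.
  rewrite -(@mulfV _ d); last by rewrite gt_eqF.
  by apply: ler_wpM2l => //; exact: ltW.
have l0 : 0 < ln x.
  by apply: lt_le_trans lx; rewrite invr_gt0.
have g0 : 0 <= (Lc c `^ k + 1) / (d ^+ 2 * ln x).
  by apply: divr_ge0 => //; apply: mulr_ge0; [apply: sqr_ge0 | exact: ltW].
have hz := hM x xM.
case: (zeta x) hz => [r | | ] /= hz.
- rewrite -EFinM lee_fin ler_pdivrMr // in hz.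
  have ar : d * ln x <= `|r|.
    apply: le_trans (_ : - r <= _); first lra.
    by rewrite -normrN ler_norm.
  have p1 : `|r| `^ (- (2 * k)) <= (d * ln x) `^ (- (2 * k)).
    by apply: powN_dec; [lra | apply/andP].
  have p2 : (d * ln x) `^ (- (2 * k)) <= (d * ln x) `^ (- 2).
    by apply: ler_powR => //; lra.
  have e2 : (d * ln x) `^ (- 2) = ((d * ln x) ^+ 2)^-1.
    by rewrite powRN powR_mulrn //; lra.
  rewrite ger0_norm; last by apply: mulr_ge0 => //; apply: powR_ge0.
  apply: le_trans (_ : _ <= ((d * ln x) ^+ 2)^-1 * ((Lc c `^ k + 1) * ln x)) _.
    apply: ler_pM => //; try exact: powR_ge0; rewrite -e2; exact: le_trans p2.
  rewrite le_eqVlt; apply/orP; left; apply/eqP.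
  by field; apply/andP; split; rewrite gt_eqF.
- move: hz; rewrite gt0_mulye ?lte_fin ?invr_gt0 //.
- by rewrite mul0r normr0.
Qed.

Theorem proposition2 (R : realType)
  (C alpha rho c : R) (t0 : nat) (t : nat -> nat) (Cs : nat -> R)
  (hC : 1 <= C) (halpha : 0 < alpha)
  (hrho0 : 0 < rho) (hrho1 : rho < Num.min alpha 1)
  (hc0 : 0 < c) (hc1 : c < 1)
  (ht0pos : (0 < t0)%N) (ht0 : t 0%N = t0)
  (hCs : forall p, c * (t p)%:R `^ rho <= Cs p <= (t p)%:R `^ rho / c)
  (hrec : forall p, ((t p.+1)%:R : R) =
          (t p)%:R + (Num.ceil (Num.max (Cs p * ln (t p)%:R) C))%:~R) :
  let h := hseq alpha in
  (* (1) *)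
  ((fun p : nat => ln (h (t p)) / ((t p.+1)%:R - (t p)%:R)) @ \oo --> (0 : R))
  /\ ((fun p : nat => ((t p.+1)%:R - (t p)%:R) *
                \sum_((t p).+1 <= s < t p.+1) h s ^+ 2) @ \oo --> (0 : R))
  (* (2) *)
  /\ (forall p, h (t p.+1) < h (t p))
  /\ (exists2 alpha' : R, 0 < alpha' &
        ((0 : \bar R) < limn_einf (fun p : nat => ((h (t p)) * (t p)%:R `^ alpha'
                                 + (t p)%:R `^ (- alpha') / h (t p))%:E))%E)
  (* (3) *)
  /\ (limn_esup (fun p : nat => (((t p.+2)%:R - (t p.+1)%:R)
                           / ((t p.+1)%:R - (t p)%:R))%:E) < (+oo : \bar R))%E
  (* (4) *)
  /\ (forall (d : nat) (dO dY : measure_display)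
        (Om : measurableType dO) (Y : measurableType dY) (P : probability Om R)
        (Ys : nat -> Om -> Y) (nu : {measure set Y -> \bar R})
        (Theta : set 'rV[R]_d) (f : 'rV[R]_d -> Y -> R) (theta_s : 'rV[R]_d)
        (k : R),
        iid_seq P Ys -> density_model P Ys nu Theta f theta_s ->
        (k = 2^-1 \/ exists n : nat, (0 < n)%N /\ k = n%:R) ->
        (1 + rho) / rho < k ->
        let S := fun p : nat =>
          \sum_(1 <= i < p.+1) ((t i)%:R - (t i.-1)%:R) `^ (- (k * indN k)) in
        let concl := fun zeta : R -> \bar R =>
          exists2 beta : R, 0 < beta &
            ((fun p : nat => eabs_invpow (zeta (h (t p) `^ (- beta))) (2 * k) * S p)
               @ \oo --> (0 : R)) in
        (A6_i P Ys Theta f theta_s k -> concl (zeta1 P Ys Theta f theta_s))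
        /\ (A6_ii P Ys Theta f theta_s -> concl (zeta2 P Ys Theta f theta_s))
        /\ (A6_iii P Ys Theta f theta_s k -> concl (zeta3 P Ys Theta f theta_s))).
Proof.
have H : hyps C rho c t Cs.
  have := hrho1; rewrite lt_min => /andP[ra r1].
  by split => //; split => //; rewrite ht0.
have ra : rho < alpha by move: hrho1; rewrite lt_min => /andP[].
have T0 := T1 H.
move=> h; rewrite {}/h.
split.
  apply: (@cvg0_bound R (fun p => (t p)%:R) _ (fun x => alpha / c * x `^ (- rho))).
  - exact: evT H.
  - move=> eps e0; have [M hM] := G1 (alpha / c) hrho0 e0.
    by exists M => x /hM [].
  - apply: nearW => p; rewrite /hseq; exact: (P1a_bound H p halpha).
split.
  apply: (@cvg0_bound R (fun p => (t p)%:R) _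
    (fun x => ((ln x * x `^ (- (alpha - rho))) / c + (C + 1) * x `^ (- alpha)) ^+ 2)).
  - exact: evT H.
  - by apply: G3 => //; lra.
  - apply: nearW => p; rewrite /hseq; exact: (P1b_bound H p halpha).
split.
  move=> p; rewrite /hseq !powRN.
  have h0 := T0 p; have h1 := D1 H p.
  rewrite ltf_pV2 ?posrE; try (apply: powR_gt0; lra).
  by apply: gt0_ltr_powR; rewrite ?nnegrE; lra.
split.
  exists alpha => //.
  have e : forall p, hseq alpha (t p) * (t p)%:R `^ alpha + (t p)%:R `^ (- alpha) / hseq alpha (t p) = 2.
    move=> p; rewrite /hseq powRN.
    have hp : 0 < (t p)%:R `^ alpha :> R by apply: powR_gt0; have := T0 p; lra.
    rewrite mulVf ?divff ?gt_eqF //; by rewrite invr_gt0.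
  rewrite /limn_einf oppe_gt0.
  apply: le_lt_trans (_ : _ <= (-2)%:E)%E _; last by rewrite lte_fin; lra.
  by apply: esup_le => n /=; rewrite e.
split.
  apply: le_lt_trans (_ : _ <= (Kc C rho c / c ^+ 2 + Kc C rho c * ln (Kc C rho c) * Lc c / c + C + 1)%:E)%E _.
  by apply: esup_le => n /=; rewrite lee_fin; exact: (ratio_bound H n).
  exact: ltry.
move=> d dO dY Om Y P Ys nu Theta f theta_s k _ _ hk hkr.
have hkr' : 1 + rho < k * rho by rewrite -ltr_pdivrMr.
have [n [n0 kn]] : exists n : nat, (0 < n)%N /\ k = n%:R.
  case: hk => // k2; exfalso; rewrite k2 in hkr'; lra.
have k1 : 1 <= k by rewrite kn ler1n.
have rk : 1 <= rho * k by lra.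
have ik : indN k = 1 by rewrite /indN asboolT //; exists n.
split; [|split].
- by case=> _ hz; exact: (part4 H halpha k1 rk ik hz).
- by move=> hz; exact: (part4 H halpha k1 rk ik hz).
- by case=> _ hz; exact: (part4 H halpha k1 rk ik hz).
Qed.
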